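(* Let $M,N\ge 0$ be integers, $a_0,\dots,a_M\in\mathbb{R}$, $f_M(x)=\sum_{m=0}^M a_mT_m(x)$. For $0\le n\le N$ and $y\in[-1,1]$ let $\tilde R_n(y)=\int_{-1}^{y}f_M(y-1-t)T_n(t)\,\mathrm{d}t=\sum_{k=0}^{M+N+1}R_{k,n}T_k(y)$. Then for all integers $k,n$ with $M+1\le k,n\le N$, $$R_{n,k}=\frac{(-1)^{n+k}\,k}{n}\,R_{k,n}.$$
   Context: $T_m(x)=\cos(m\arccos x)$ is the $m$-th Chebyshev polynomial; $R=(R_{k,n})_{0\le k\le M+N+1,\,0\le n\le N}$ is the matrix of Chebyshev coefficients of the convolutions $\tilde R_n$ (the Chebyshev convolution matrix of $f_M$). *)

(* Defs.v *)
From Stdlib Require Import Reals.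
From Coquelicot Require Import Coquelicot.
Open Scope R_scope.

Definition cheb (m : nat) (x : R) : R := cos (INR m * acos x).

Definition fM (M : nat) (a : nat -> R) (x : R) : R :=
  sum_f_R0 (fun m => a m * cheb m x) M.

Definition convR (M : nat) (a : nat -> R) (n : nat) (y : R) : R :=
  RInt (fun t => fM M a (y - 1 - t) * cheb n t) (-1) y.

(* Main.v *)
Require Import Defs.
From Stdlib Require Import Reals Lra Lia.
From Coquelicot Require Import Coquelicot.
Open Scope R_scope.
Lemma D_plus (f g : R -> R) (x a b : R) : is_derive f x a -> is_derive g x b -> is_derive (fun t => f t + g t) x (a + b).
Proof. rewrite !is_derive_Reals. intros; now apply (derivable_pt_lim_plus f g). Qed.
Lemma D_minus (f g : R -> R) (x a b : R) : is_derive f x a -> is_derive g x b -> is_derive (fun t => f t - g t) x (a - b).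
Proof. rewrite !is_derive_Reals. intros; now apply (derivable_pt_lim_minus f g). Qed.
Lemma D_mult (f g : R -> R) (x a b : R) : is_derive f x a -> is_derive g x b -> is_derive (fun t => f t * g t) x (a * g x + f x * b).
Proof. rewrite !is_derive_Reals. intros; now apply (derivable_pt_lim_mult f g). Qed.
Lemma D_scal (f : R -> R) (c x a : R) : is_derive f x a -> is_derive (fun t => c * f t) x (c * a).
Proof. rewrite !is_derive_Reals. intros; now apply (derivable_pt_lim_scal f c). Qed.
Lemma D_const (c x : R) : is_derive (fun _ => c) x 0.
Proof. rewrite is_derive_Reals. apply (derivable_pt_lim_const c). Qed.
Lemma D_id (x : R) : is_derive (fun t => t) x 1.
Proof. rewrite is_derive_Reals. apply derivable_pt_lim_id. Qed.
Lemma D_refl (f : R -> R) (x a b : R) : is_derive f x a -> a = b -> is_derive f x b.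
Proof. intros H ->; exact H. Qed.
Lemma D_ext (f g : R -> R) (x a : R) : (forall t, f t = g t) -> is_derive f x a -> is_derive g x a.
Proof. intros H; apply is_derive_ext; exact H. Qed.
Lemma D_refl_comp (f : R -> R) (y x a : R) : is_derive f (y - 1 - x) a -> is_derive (fun t => f (y - 1 - t)) x (- a).
Proof. rewrite !is_derive_Reals. intros H.
  assert (H1 : derivable_pt_lim (fun t => y - 1 - t) x (-1)).
  { rewrite <- is_derive_Reals. auto_derive; auto; ring. }
  pose proof (derivable_pt_lim_comp _ _ _ _ _ H1 H). unfold comp in H0.
  replace (-a) with (a * -1) by ring. exact H0. Qed.

Fixpoint chebP (k : nat) (x : R) : R :=
  match k with
  | O => 1
  | S k' => match k' with
            | O => x
            | S k'' => 2 * x * chebP k' x - chebP k'' x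
            end
  end.

Fixpoint chebU (k : nat) (x : R) : R :=
  match k with
  | O => 1
  | S k' => match k' with
            | O => 2 * x
            | S k'' => 2 * x * chebU k' x - chebU k'' x
            end
  end.

Lemma two_step (P : nat -> Prop) : P O -> P 1%nat -> (forall k, P k -> P (S k) -> P (S (S k))) -> forall k, P k.
Proof.
  intros H0 H1 HS k. assert (P k /\ P (S k)). { induction k as [|k [IH1 IH2]]; auto. }
  tauto.
Qed.

Lemma cheb_eq k y : -1 <= y <= 1 -> cheb k y = chebP k y.
Proof.
  intros Hy. unfold cheb. revert k. apply two_step.
  - simpl. rewrite Rmult_0_l. apply cos_0.
  - simpl. rewrite Rmult_1_l. now apply cos_acos.
  - intros k IH1 IH2. change (chebP (S (S k)) y) with (2 * y * chebP (S k) y - chebP k y).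
    rewrite <- IH1, <- IH2. rewrite !S_INR.
    set (t := acos y). rewrite <- (cos_acos y Hy). fold t.
    replace ((INR k + 1 + 1) * t) with ((INR k + 1) * t + t) by ring.
    replace (INR k * t) with ((INR k + 1) * t - t) by ring.
    rewrite cos_plus, cos_minus. ring.
Qed.

Lemma chebP_U k x : chebP (S k) x = chebU (S k) x - x * chebU k x.
Proof.
  revert k. apply two_step.
  - simpl. ring.
  - simpl. ring.
  - intros k IH1 IH2.
    change (chebP (S (S (S k))) x) with (2 * x * chebP (S (S k)) x - chebP (S k) x).
    change (chebU (S (S (S k))) x) with (2 * x * chebU (S (S k)) x - chebU (S k) x).
    rewrite IH1, IH2.
    change (chebU (S (S k)) x) with (2 * x * chebU (S k) x - chebU k x). ring.
Qed.

Lemma chebU_diff k x : chebU (S (S k)) x - chebU k x = 2 * chebP (S (S k)) x.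
Proof.
  rewrite chebP_U.
  change (chebU (S (S k)) x) with (2 * x * chebU (S k) x - chebU k x). ring.
Qed.

Lemma chebP_deriv k (x : R) : is_derive (chebP k) x (INR k * chebU (pred k) x).
Proof.
  revert k. apply two_step.
  - simpl. apply (D_ext (fun _ => 1)); [reflexivity|]. 
    eapply D_refl; [apply (D_const 1 x)|]. simpl; ring.
  - simpl. apply (D_ext (fun x => x)); [reflexivity|].
    eapply D_refl; [apply (D_id x)|]. simpl; ring.
  - intros k IH1 IH2.
    apply (D_ext (fun x => 2 * x * chebP (S k) x - chebP k x)); [reflexivity|].
    eapply D_refl.
    { apply D_minus; [apply D_mult; [apply D_scal, D_id|exact IH2]|exact IH1]. }
    destruct k as [|k].
    + simpl. ring.
    + simpl pred. rewrite chebP_U.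
      change (chebU (S (S k)) x) with (2 * x * chebU (S k) x - chebU k x).
      rewrite !S_INR. ring.
Qed.

Fixpoint G (p k n : nat) : R :=
  match p with
  | O => if Nat.eqb k n then 1 else 0
  | S p' => match n with
            | O => G p' k 1
            | S O => G p' k 2 / 4
            | S (S m) => (G p' k (S (S (S m))) / INR (S (S (S m))) - G p' k (S m) / INR (S m)) / 2
            end
  end.

Lemma G_S0 p k : G (S p) k 0 = G p k 1. Proof. reflexivity. Qed.
Lemma G_S1 p k : G (S p) k 1 = G p k 2 / 4. Proof. reflexivity. Qed.
Lemma G_SS p k m : G (S p) k (S (S m)) = (G p k (S (S (S m))) / INR (S (S (S m))) - G p k (S m) / INR (S m)) / 2.
Proof. reflexivity. Qed.
Lemma G_0 k n : G 0 k n = if Nat.eqb k n then 1 else 0. Proof. reflexivity. Qed.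

Lemma INR_S_pos n : 0 < INR (S n).
Proof. apply lt_0_INR; lia. Qed.
Lemma INR_S_neq n : INR (S n) <> 0.
Proof. apply Rgt_not_eq, INR_S_pos. Qed.

Ltac dest_eqb := repeat match goal with |- context [Nat.eqb ?a ?b] => destruct (Nat.eqb_spec a b) end.

Lemma G_row p s c : G (S p) (S (S s)) c = (G p (S s) c - G p (S (S (S s))) c) / (2 * INR (S (S s))).
Proof.
  revert c. induction p as [|p IH]; intros c.
  - destruct c as [|[|m]].
    + rewrite G_S0, !G_0. dest_eqb; try lia. field. apply INR_S_neq.
    + rewrite G_S1, !G_0. dest_eqb; try lia.
      * assert (s = 0%nat) by lia. subst. simpl. field.
      * field. apply INR_S_neq.
    + rewrite G_SS, !G_0. dest_eqb; try lia; subst; 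
      try (assert (s = S m) by lia; subst); try (assert (S s = m) by lia; subst);
      field; repeat split; apply INR_S_neq.
  - destruct c as [|[|m]].
    + rewrite (G_S0 (S p)), IH, !(G_S0 p). field. apply INR_S_neq.
    + rewrite (G_S1 (S p)), IH, !(G_S1 p). field. apply INR_S_neq.
    + rewrite (G_SS (S p)), !IH, !(G_SS p). field. repeat split; apply INR_S_neq.
Qed.

Lemma G_supp p n k : (n + p < k)%nat -> G p k n = 0.
Proof.
  revert n. induction p as [|p IH]; intros n Hk.
  - rewrite G_0. dest_eqb; [lia|reflexivity].
  - destruct n as [|[|m]].
    + rewrite G_S0. apply IH. lia.
    + rewrite G_S1, IH by lia. field.
    + rewrite G_SS, !IH by lia. field. split; apply INR_S_neq.
Qed.

Ltac peel := repeat match goal with H : S _ = S _ |- _ => apply eq_add_S in H end; subst.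

Lemma G_sym1 a b : (1 <= a)%nat -> (1 <= b)%nat ->
  (-1) ^ a * G 1 a b / INR b = (-1) ^ b * G 1 b a / INR a.
Proof.
  intros Ha Hb.
  destruct a as [|[|a]]; [lia| |]; destruct b as [|[|b]]; try lia;
  rewrite ?G_S1, ?G_SS, !G_0; dest_eqb; try lia; peel;
  simpl pow; rewrite ?S_INR; simpl INR; field;
  try (pose proof (pos_INR a)); try (pose proof (pos_INR b)); repeat split; lra.
Qed.

Lemma G_symH q a b : (S q <= a)%nat -> (S q <= b)%nat ->
  (-1) ^ a * G (S q) a b / INR b = (-1) ^ b * G (S q) b a / INR a.
Proof.
  revert a b. induction q as [|q IH]; intros a b Ha Hb.
  - apply G_sym1; lia.
  - destruct b as [|[|m]]; try lia.
    assert (Ha0 : INR a <> 0) by (apply not_0_INR; lia).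
    rewrite G_SS, G_row.
    replace ((-1) ^ a * ((G (S q) a (S (S (S m))) / INR (S (S (S m))) - G (S q) a (S m) / INR (S m)) / 2) / INR (S (S m)))
      with (((-1) ^ a * G (S q) a (S (S (S m))) / INR (S (S (S m))) - (-1) ^ a * G (S q) a (S m) / INR (S m)) / 2 / INR (S (S m)))
      by (field; repeat split; apply INR_S_neq).
    rewrite (IH a (S (S (S m)))), (IH a (S m)) by lia.
    simpl pow. field. repeat split; try apply INR_S_neq; auto.
Qed.

Lemma G_sym q n k : (S q <= n)%nat -> (S q <= k)%nat ->
  G (S q) n k = (-1) ^ (n + k) * INR k / INR n * G (S q) k n.
Proof.
  intros Hn Hk. pose proof (G_symH q n k Hn Hk) as H.
  assert (Hn0 : INR n <> 0) by (apply not_0_INR; lia).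
  assert (Hk0 : INR k <> 0) by (apply not_0_INR; lia).
  assert (Hs : (-1) ^ n * (-1) ^ n = 1).
  { rewrite <- pow_add. replace (n + n)%nat with (2 * n)%nat by lia. rewrite pow_mult. 
    replace ((-1) ^ 2) with 1 by (simpl; ring). apply pow1. }
  rewrite pow_add.
  apply (Rmult_eq_reg_l ((-1) ^ n / INR k)); [| apply Rmult_integral_contrapositive; split; [apply pow_nonzero; lra| apply Rinv_neq_0_compat; auto]].
  replace ((-1) ^ n / INR k * G (S q) n k) with ((-1) ^ n * G (S q) n k / INR k) by (field; auto).
  rewrite H. field_simplify; auto. replace (((-1)^n)^2) with 1 by (rewrite <- Hs; ring). field; auto.
Qed.

Definition chsum (c : nat -> R) (d : nat) (x : R) : R := sum_f_R0 (fun k => c k * chebP k x) d.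
Definition IsCheb (d : nat) (h : R -> R) := exists c, forall x, h x = chsum c d x.

Lemma sum_zero n : sum_f_R0 (fun _ => 0) n = 0.
Proof. induction n; simpl; [ring| rewrite IHn; ring]. Qed.

Lemma chsum_eq a b B x : (forall k, (k <= B)%nat -> a k = b k) -> chsum a B x = chsum b B x.
Proof. intros H. unfold chsum. apply sum_eq. intros i Hi. now rewrite H. Qed.

Lemma chsum_comb u v a b B x : u * chsum a B x + v * chsum b B x = chsum (fun k => u * a k + v * b k) B x.
Proof.
  unfold chsum. induction B as [|B IH]; simpl; [ring|]. rewrite <- IH. ring.
Qed.

Lemma IsCheb_ext d h g : (forall x, h x = g x) -> IsCheb d g -> IsCheb d h.
Proof. intros H [c Hc]. exists c. intros x. now rewrite H, Hc. Qed.

Lemma IsCheb_mono d h : IsCheb d h -> IsCheb (S d) h.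
Proof.
  intros [c Hc]. exists (fun k => if Nat.eqb k (S d) then 0 else c k). intros x.
  rewrite Hc. unfold chsum. change (sum_f_R0 ?f (S d)) with (sum_f_R0 f d + f (S d)). cbv beta. rewrite Nat.eqb_refl.
  rewrite Rmult_0_l, Rplus_0_r. apply sum_eq. intros i Hi.
  destruct (Nat.eqb_spec i (S d)); [lia|reflexivity].
Qed.

Lemma IsCheb_mono_le d d' h : (d <= d')%nat -> IsCheb d h -> IsCheb d' h.
Proof. intros Hd. induction Hd; auto. intros; apply IsCheb_mono; auto. Qed.

Lemma IsCheb_lin d u v h g : IsCheb d h -> IsCheb d g -> IsCheb d (fun x => u * h x + v * g x).
Proof.
  intros [a Ha] [b Hb]. exists (fun k => u * a k + v * b k). intros x.
  rewrite Ha, Hb. apply chsum_comb.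
Qed.

Lemma IsCheb_const u : IsCheb 0 (fun _ => u).
Proof. exists (fun _ => u). intros x. unfold chsum. simpl. ring. Qed.

Lemma delta_sum n B x : (n <= B)%nat -> chsum (fun k => if Nat.eqb k n then 1 else 0) B x = chebP n x.
Proof.
  intros HB. induction HB as [|B HB IH].
  - destruct n as [|n].
    + unfold chsum. simpl. ring.
    + unfold chsum. cbn [sum_f_R0]. rewrite Nat.eqb_refl.
      rewrite (sum_eq _ (fun _ => 0)). { rewrite sum_zero. ring. }
      intros i Hi. destruct (Nat.eqb_spec i (S n)); [lia|ring].
  - unfold chsum in *. cbn [sum_f_R0]. rewrite IH.
    destruct (Nat.eqb_spec (S B) n); [lia|ring].
Qed.

Lemma IsCheb_chebP d : IsCheb d (chebP d).
Proof. exists (fun k => if Nat.eqb k d then 1 else 0). intros x. symmetry. apply delta_sum. lia. Qed.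

Lemma IsCheb_U d : IsCheb d (chebU d).
Proof.
  revert d. apply two_step.
  - apply (IsCheb_ext _ _ (chebP 0)); [reflexivity|apply IsCheb_chebP].
  - apply (IsCheb_ext _ _ (fun x => 2 * chebP 1 x + 0 * chebP 1 x)).
    + intros x; simpl; ring.
    + apply IsCheb_lin; apply IsCheb_chebP.
  - intros k H1 H2.
    apply (IsCheb_ext _ _ (fun x => 1 * chebU k x + 2 * chebP (S (S k)) x)).
    + intros x. pose proof (chebU_diff k x). lra.
    + apply IsCheb_lin; [|apply IsCheb_chebP]. do 2 apply IsCheb_mono. exact H1.
Qed.

Lemma chsum_deriv d c : exists h', (forall x, is_derive (chsum c (S d)) x (h' x)) /\ IsCheb d h'.
Proof.
  induction d as [|d [h' [Hd Hc]]].
  - exists (fun _ => c 1%nat). split; [|apply IsCheb_const].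
    intros x. apply (D_ext (fun t => c 0%nat + c 1%nat * t)).
    { intros t. unfold chsum. simpl. ring. }
    eapply D_refl; [apply D_plus; [apply D_const|apply D_scal, D_id]|ring].
  - exists (fun x => 1 * h' x + c (S (S d)) * (INR (S (S d)) * chebU (S d) x)). split.
    + intros x. apply (D_ext (fun t => chsum c (S d) t + c (S (S d)) * chebP (S (S d)) t)).
      { intros t. reflexivity. }
      eapply D_refl; [apply D_plus; [apply Hd|apply D_scal, chebP_deriv]|]. simpl pred. ring.
    + apply IsCheb_lin; [apply IsCheb_mono, Hc|].
      apply (IsCheb_ext _ _ (fun x => INR (S (S d)) * chebU (S d) x + 0 * chebU (S d) x)).
      { intros; ring. }
      apply IsCheb_lin; apply IsCheb_U.
Qed.

Lemma IsCheb_deriv d h : IsCheb (S d) h -> exists h', (forall x, is_derive h x (h' x)) /\ IsCheb d h'.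
Proof.
  intros [c Hc]. destruct (chsum_deriv d c) as [h' [H1 H2]]. exists h'. split; auto.
  intros x. apply (D_ext (chsum c (S d))); [intros; now rewrite Hc|]. apply H1.
Qed.

Lemma IsCheb_exd d h : IsCheb d h -> forall x, ex_derive h x.
Proof.
  intros H x. destruct (IsCheb_deriv d h (IsCheb_mono _ _ H)) as [h' [H1 _]].
  exists (h' x). apply H1.
Qed.

Fixpoint Phi (p n : nat) (x : R) : R :=
  match p with
  | O => chebP n x
  | S p' => match n with
            | O => Phi p' 1 x
            | S O => Phi p' 2 x / 4
            | S (S m) => (Phi p' (S (S (S m))) x / INR (S (S (S m))) - Phi p' (S m) x / INR (S m)) / 2
            end
  end.

Lemma Phi_deriv p n (x : R) : is_derive (Phi (S p) n) x (Phi p n x).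
Proof.
  revert n x. induction p as [|p IH]; intros n x.
  - destruct n as [|[|m]].
    + apply (D_ext (chebP 1)); [reflexivity|]. eapply D_refl; [apply chebP_deriv|]. simpl; ring.
    + apply (D_ext (fun t => / 4 * chebP 2 t)); [intros; simpl; field|].
      eapply D_refl; [apply D_scal, chebP_deriv|]. simpl. field.
    + apply (D_ext (fun t => / 2 * (/ INR (S (S (S m))) * chebP (S (S (S m))) t - / INR (S m) * chebP (S m) t))).
      { intros t; change (Phi 1 (S (S m)) t) with ((chebP (S(S(S m))) t / INR (S(S(S m))) - chebP (S m) t / INR (S m)) / 2).
        field. split; apply INR_S_neq. }
      eapply D_refl; [apply D_scal, D_minus; apply D_scal, chebP_deriv|].
      change (Phi 0 (S (S m)) x) with (chebP (S (S m)) x).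
      simpl pred. replace (chebP (S (S m)) x) with ((chebU (S (S m)) x - chebU m x)/2) by (rewrite chebU_diff; field).
      field. split; apply INR_S_neq.
  - destruct n as [|[|m]].
    + apply (D_ext (Phi (S p) 1)); [reflexivity|]. apply IH.
    + apply (D_ext (fun t => / 4 * Phi (S p) 2 t)); [intros; simpl; field|].
      eapply D_refl; [apply D_scal, IH|]. simpl. field.
    + apply (D_ext (fun t => / 2 * (/ INR (S (S (S m))) * Phi (S p) (S (S (S m))) t - / INR (S m) * Phi (S p) (S m) t))).
      { intros; change (Phi (S (S p)) (S (S m)) t) with
          ((Phi (S p) (S (S (S m))) t / INR (S (S (S m))) - Phi (S p) (S m) t / INR (S m)) / 2).
        field. split; apply INR_S_neq. }
      eapply D_refl; [apply D_scal, D_minus; apply D_scal, IH|].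
      change (Phi (S p) (S (S m)) x) with
          ((Phi p (S (S (S m))) x / INR (S (S (S m))) - Phi p (S m) x / INR (S m)) / 2).
      field. split; apply INR_S_neq.
Qed.

Lemma Phi_exd p n x : ex_derive (Phi p n) x.
Proof.
  destruct p as [|p].
  - eexists. apply chebP_deriv.
  - eexists. apply Phi_deriv.
Qed.

Lemma Phi_sum p n B x : (n + p <= B)%nat -> Phi p n x = chsum (fun k => G p k n) B x.
Proof.
  revert n. induction p as [|p IH]; intros n HB.
  - simpl. symmetry. apply delta_sum. lia.
  - destruct n as [|[|m]].
    + simpl Phi. rewrite IH by lia. reflexivity.
    + simpl Phi. rewrite IH by lia.
      replace (chsum (fun k => G p k 2) B x / 4) with (/4 * chsum (fun k => G p k 2) B x + 0 * chsum (fun k => G p k 2) B x) by field.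
      rewrite chsum_comb. apply chsum_eq. intros k _. rewrite G_S1. field.
    + change (Phi (S p) (S (S m)) x) with
          ((Phi p (S (S (S m))) x / INR (S (S (S m))) - Phi p (S m) x / INR (S m)) / 2).
      rewrite !IH by lia.
      match goal with |- (?A / ?a - ?B / ?b) / 2 = _ =>
        replace ((A / a - B / b) / 2) with (/ (2 * a) * A + (- / (2 * b)) * B) by (field; split; apply INR_S_neq) end.
      rewrite chsum_comb. apply chsum_eq. intros k _. rewrite G_SS. field. split; apply INR_S_neq.
Qed.

Lemma cont_all (f : R -> R) : (forall x, ex_derive f x) -> forall x, continuous f x.
Proof. intros H x. apply (@ex_derive_continuous R_AbsRing R_NormedModule f x), H. Qed.

Lemma EX_of (f : R -> R) : (forall x, exists l, is_derive f x l) -> forall x, ex_derive f x.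
Proof. intros H x. destruct (H x) as [l Hl]. exists l. exact Hl. Qed.

Lemma EX_plus (f g : R -> R) : (forall x, ex_derive f x) -> (forall x, ex_derive g x) -> forall x, ex_derive (fun t => f t + g t) x.
Proof. intros Hf Hg x. destruct (Hf x) as [a Ha]. destruct (Hg x) as [b Hb]. exists (a + b). now apply D_plus. Qed.
Lemma EX_mult (f g : R -> R) : (forall x, ex_derive f x) -> (forall x, ex_derive g x) -> forall x, ex_derive (fun t => f t * g t) x.
Proof. intros Hf Hg x. destruct (Hf x) as [a Ha]. destruct (Hg x) as [b Hb]. exists (a * g x + f x * b). now apply D_mult. Qed.
Lemma EX_scal (f : R -> R) c : (forall x, ex_derive f x) -> forall x, ex_derive (fun t => c * f t) x.
Proof. intros Hf x. destruct (Hf x) as [a Ha]. exists (c * a). now apply D_scal. Qed.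
Lemma EX_refl (f : R -> R) y : (forall x, ex_derive f x) -> forall x, ex_derive (fun t => f (y - 1 - t)) x.
Proof. intros Hf x. destruct (Hf (y - 1 - x)) as [a Ha]. exists (- a). now apply D_refl_comp. Qed.

Ltac toR := match goal with |- ?a = ?b => change (@eq R a b) end.

Lemma is_RInt_val (f : R -> R) a b (l l' : R) : is_RInt f a b l -> l = l' -> is_RInt f a b l'.
Proof. intros H <-; exact H. Qed.

Lemma ibp d : forall h, IsCheb d h -> exists cs : nat -> R, forall n q, exists E, IsCheb d E /\ forall y,
  is_RInt (fun t => h (y - 1 - t) * Phi q n t) (-1) y
    (sum_f_R0 (fun j => cs j * Phi (S (q + j)) n y) d + E y).
Proof.
  induction d as [|d IH]; intros h Hh.
  - destruct Hh as [c Hc]. exists (fun _ => c 0%nat). intros n q.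
    exists (fun _ => - c 0%nat * Phi (S q) n (-1)). split; [apply IsCheb_const|]. intros y.
    assert (Hd : is_RInt (fun t => c 0%nat * Phi q n t) (-1) y (c 0%nat * Phi (S q) n y - c 0%nat * Phi (S q) n (-1))).
    { apply (is_RInt_derive (fun t => c 0%nat * Phi (S q) n t)).
      - intros x _. apply D_scal, Phi_deriv.
      - intros x _. apply cont_all. apply EX_scal. intros z; apply Phi_exd. }
    eapply is_RInt_val.
    + apply (is_RInt_ext (fun t => c 0%nat * Phi q n t)); [|exact Hd].
      intros t _. toR. rewrite Hc. unfold chsum. cbn [sum_f_R0 chebP]. ring.
    + toR. cbn [sum_f_R0]. rewrite Nat.add_0_r. ring.
  - destruct (IsCheb_deriv d h Hh) as [h' [Hd' Hc']].
    destruct (IH h' Hc') as [cs' Hcs'].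
    exists (fun j => match j with O => h (-1) | S j' => cs' j' end). intros n q.
    destruct (Hcs' n (S q)) as [E' [HE'c HE']].
    exists (fun y => 1 * E' y + (- Phi (S q) n (-1)) * h y). split.
    { apply IsCheb_lin; [apply IsCheb_mono; auto| auto]. }
    intros y.
    assert (HF : is_RInt (fun t => - h' (y - 1 - t) * Phi (S q) n t + h (y - 1 - t) * Phi q n t) (-1) y
       (h (y - 1 - y) * Phi (S q) n y - h (y - 1 - (-1)) * Phi (S q) n (-1))).
    { apply (is_RInt_derive (fun t => h (y - 1 - t) * Phi (S q) n t)).
      - intros x _. eapply D_refl. { apply D_mult; [apply D_refl_comp; apply Hd' | apply Phi_deriv]. } cbv beta. ring.
      - intros x _. apply cont_all. apply EX_plus; apply EX_mult.
        + intros z. destruct (IsCheb_exd d h' Hc' (y - 1 - z)) as [l Hl].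
          exists (-1 * - l). apply (D_ext (fun t => -1 * h' (y - 1 - t))); [intros; ring|].
          apply D_scal. apply D_refl_comp. exact Hl.
        + intros z; apply Phi_exd.
        + apply EX_refl. apply (IsCheb_exd _ _ Hh).
        + intros z; apply Phi_exd. }
    pose proof (is_RInt_plus _ _ _ _ _ _ HF (HE' y)) as HS.
    eapply is_RInt_val; [eapply is_RInt_ext; [|exact HS]|].
    + intros t _. toR. cbv beta. change (plus ?a ?b) with (a + b). ring.
    + toR. change (plus ?a ?b) with (a + b).
      rewrite (decomp_sum _ (S d)) by lia. simpl pred. cbv beta iota.
      rewrite (sum_eq (fun i => cs' i * Phi (S (q + S i)) n y) (fun j => cs' j * Phi (S (S q + j)) n y))
        by (intros; now rewrite Nat.add_succ_r).
      rewrite Nat.add_0_r.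
      replace (y - 1 - y) with (-1) by ring. replace (y - 1 - -1) with y by ring. ring.
Qed.

Lemma deriv_zero (F F' : R -> R) : (forall t, 0 < t < PI -> F t = 0) -> (forall t, is_derive F t (F' t)) ->
  forall t, 0 < t < PI -> F' t = 0.
Proof.
  intros H HD t Ht.
  assert (Hloc : locally t (fun u => 0 < u /\ u < PI)).
  { apply (open_and _ _ (open_gt 0) (open_lt PI)). exact Ht. }
  assert (H0 : is_derive F t 0).
  { apply (is_derive_ext_loc (fun _ => 0)).
    - eapply filter_imp; [|exact Hloc]. intros u Hu. symmetry; apply H; auto.
    - apply D_const. }
  rewrite <- (is_derive_unique _ _ _ (HD t)). now apply is_derive_unique.
Qed.

Lemma D_sum (f : nat -> R -> R) (f' : nat -> R -> R) K (x : R) :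
  (forall k, is_derive (f k) x (f' k x)) ->
  is_derive (fun t => sum_f_R0 (fun k => f k t) K) x (sum_f_R0 (fun k => f' k x) K).
Proof.
  intros H. induction K as [|K IH].
  - apply (D_ext (f 0%nat)); [reflexivity|]. apply H.
  - apply (D_ext (fun t => sum_f_R0 (fun k => f k t) K + f (S K) t)); [reflexivity|].
    apply D_plus; auto.
Qed.

Lemma sum_comb u v (a b : nat -> R) K : u * sum_f_R0 a K + v * sum_f_R0 b K = sum_f_R0 (fun k => u * a k + v * b k) K.
Proof. induction K as [|K IH]; simpl; [ring|]. rewrite <- IH. ring. Qed.

Lemma cos_indep K : forall d : nat -> R, (forall t, 0 < t < PI -> sum_f_R0 (fun k => d k * cos (INR k * t)) K = 0) ->
  forall k, (k <= K)%nat -> d k = 0.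
Proof.
  induction K as [|K IH]; intros d H k Hk.
  - assert (k = 0%nat) by lia. subst. pose proof PI_RGT_0.
    pose proof (H (PI / 2) ltac:(lra)) as H1. simpl in H1. rewrite Rmult_0_l, cos_0 in H1. lra.
  - set (F := fun t => sum_f_R0 (fun k => d k * cos (INR k * t)) (S K)).
    set (F1 := fun t => sum_f_R0 (fun k => - (d k * INR k) * sin (INR k * t)) (S K)).
    set (F2 := fun t => sum_f_R0 (fun k => - (d k * INR k * INR k) * cos (INR k * t)) (S K)).
    assert (HD1 : forall t, is_derive F t (F1 t)).
    { intros t. apply (D_sum (fun k t => d k * cos (INR k * t)) (fun k t => - (d k * INR k) * sin (INR k * t))).
      intros j. auto_derive; auto. ring. }
    assert (HD2 : forall t, is_derive F1 t (F2 t)).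
    { intros t. apply (D_sum (fun k t => - (d k * INR k) * sin (INR k * t)) (fun k t => - (d k * INR k * INR k) * cos (INR k * t))).
      intros j. auto_derive; auto. ring. }
    assert (HF1 := deriv_zero F F1 H HD1).
    assert (HF2 := deriv_zero F1 F2 HF1 HD2).
    set (d' := fun k => d k * (INR (S K) * INR (S K) - INR k * INR k)).
    assert (Hd' : forall k, (k <= K)%nat -> d' k = 0).
    { apply IH. intros t Ht.
      transitivity (INR (S K) * INR (S K) * F t + 1 * F2 t).
      2:{ assert (HF0 : F t = 0) by (apply H; auto). rewrite HF0, HF2 by auto. ring. }
      unfold F, F2. rewrite sum_comb. change (sum_f_R0 ?f (S K)) with (sum_f_R0 f K + f (S K)). cbv beta.
      rewrite (sum_eq (fun k => INR (S K) * INR (S K) * (d k * cos (INR k * t)) + 1 * (- (d k * INR k * INR k) * cos (INR k * t)))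
         (fun k => d' k * cos (INR k * t))) by (intros; unfold d'; ring).
      ring. }
    assert (Hlow : forall k, (k <= K)%nat -> d k = 0).
    { intros j Hj. pose proof (Hd' j Hj) as E. unfold d' in E.
      apply Rmult_integral in E. destruct E as [E|E]; auto. exfalso.
      assert (INR j < INR (S K)) by (apply lt_INR; lia).
      pose proof (pos_INR j). nra. }
    destruct (Nat.eq_dec k (S K)) as [->|Hne]; [|apply Hlow; lia].
    clear HD1 HD2 HF1 HF2. pose proof PI_RGT_0. pose proof (INR_S_pos K).
    assert (Hge1 : 1 <= INR (S K)) by (rewrite S_INR; pose proof (pos_INR K); lra).
    set (t0 := PI / (4 * INR (S K))).
    assert (Ht0 : 0 < t0 < PI).
    { unfold t0. split. { apply Rdiv_lt_0_compat; lra. }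
      apply (Rmult_lt_reg_r (4 * INR (S K))); [lra|]. unfold Rdiv. rewrite Rmult_assoc, Rinv_l by lra. nra. }
    pose proof (H t0 Ht0) as E. cbn [sum_f_R0] in E.
    rewrite (sum_eq _ (fun _ => 0)) in E by (intros i Hi; rewrite Hlow by lia; ring).
    rewrite sum_zero in E.
    replace (INR (S K) * t0) with (PI / 4) in E by (unfold t0; field; lra).
    rewrite cos_PI4 in E.
    assert (0 < 1 / sqrt 2) by (apply Rdiv_lt_0_compat; [lra| apply sqrt_lt_R0; lra]).
    nra.
Qed.

Lemma cheb_unique K d : (forall y, -1 <= y <= 1 -> chsum d K y = 0) -> forall k, (k <= K)%nat -> d k = 0.
Proof.
  intros H. apply cos_indep. intros t Ht.
  rewrite <- (H (cos t)) by apply COS_bound. unfold chsum. apply sum_eq. intros i _.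
  rewrite <- cheb_eq by apply COS_bound. unfold cheb. rewrite acos_cos by lra. reflexivity.
Qed.

Lemma sum_swap (cs : nat -> R) (g : nat -> nat -> R) M B x :
  sum_f_R0 (fun j => cs j * chsum (g j) B x) M = chsum (fun k => sum_f_R0 (fun j => cs j * g j k) M) B x.
Proof.
  induction M as [|M IH].
  - cbn [sum_f_R0]. replace (cs 0%nat * chsum (g 0%nat) B x) with (cs 0%nat * chsum (g 0%nat) B x + 0 * chsum (g 0%nat) B x) by ring.
    rewrite chsum_comb. apply chsum_eq. intros; ring.
  - cbn [sum_f_R0]. rewrite IH.
    replace (chsum (fun k => sum_f_R0 (fun j => cs j * g j k) M) B x + cs (S M) * chsum (g (S M)) B x)
      with (1 * chsum (fun k => sum_f_R0 (fun j => cs j * g j k) M) B x + cs (S M) * chsum (g (S M)) B x) by ring.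
    rewrite chsum_comb. apply chsum_eq. intros; ring.
Qed.

Lemma chsum_extend e M B x : (M <= B)%nat -> chsum (fun k => if Nat.leb k M then e k else 0) B x = chsum e M x.
Proof.
  intros HB. induction HB as [|B HB IH].
  - apply chsum_eq. intros k Hk. destruct (Nat.leb_spec k M); [reflexivity|lia].
  - unfold chsum in *. cbn [sum_f_R0]. rewrite IH. destruct (Nat.leb_spec (S B) M); [lia|ring].
Qed.

Lemma sum_scal_l c (f : nat -> R) M : sum_f_R0 (fun j => c * f j) M = c * sum_f_R0 f M.
Proof. induction M as [|M IH]; cbn [sum_f_R0]; [ring|]. rewrite IH; ring. Qed.

Theorem theorem3p4 (M N : nat) (a : nat -> R) (Rc : nat -> nat -> R)
  (hR : forall n : nat, (n <= N)%nat -> forall y : R, -1 <= y <= 1 ->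
     convR M a n y = sum_f_R0 (fun k => Rc k n * cheb k y) (M + N + 1)) :
  forall k n : nat, (M + 1 <= k <= N)%nat -> (M + 1 <= n <= N)%nat ->
    Rc n k = (-1) ^ (n + k) * INR k / INR n * Rc k n.
Proof.
  assert (Hhf : IsCheb M (chsum a M)) by (exists a; intros; reflexivity).
  destruct (ibp M _ Hhf) as [cs Hcs].
  assert (Coef : forall n, (n <= N)%nat -> forall k, (M < k)%nat -> (k <= M + N + 1)%nat ->
            Rc k n = sum_f_R0 (fun j => cs j * G (S j) k n) M).
  { intros n Hn.
    destruct (Hcs n 0%nat) as [E [[e He] HE]].
    set (B := (M + N + 1)%nat).
    set (X := fun k => sum_f_R0 (fun j => cs j * G (S j) k n) M + (if Nat.leb k M then e k else 0)).
    assert (Hz : forall y, -1 <= y <= 1 -> chsum (fun k => 1 * Rc k n + (-1) * X k) B y = 0).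
    { intros y Hy. rewrite <- chsum_comb.
      assert (Hc1 : chsum (fun k => Rc k n) B y = convR M a n y).
      { rewrite hR by auto. unfold chsum. apply sum_eq. intros i _. rewrite cheb_eq by auto. reflexivity. }
      assert (Hc2 : convR M a n y = chsum X B y).
      { unfold convR.
        rewrite (RInt_ext _ (fun t => chsum a M (y - 1 - t) * Phi 0 n t)).
        2:{ intros t Ht. rewrite Rmin_left, Rmax_right in Ht by lra.
            assert (-1 <= y - 1 - t <= 1) by lra.
            unfold fM, chsum. simpl Phi. rewrite cheb_eq by lra. f_equal.
            apply sum_eq. intros i _. rewrite cheb_eq by auto. reflexivity. }
        rewrite (is_RInt_unique _ _ _ _ (HE y)).
        rewrite (sum_eq _ (fun j => cs j * chsum (fun k => G (S j) k n) B y)).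
        2:{ intros j Hj. simpl plus. rewrite (Phi_sum _ _ B) by (unfold B; lia). reflexivity. }
        rewrite sum_swap, He, <- (chsum_extend e M B) by (unfold B; lia).
        replace (chsum (fun k => sum_f_R0 (fun j => cs j * G (S j) k n) M) B y +
                 chsum (fun k => if Nat.leb k M then e k else 0) B y)
          with (1 * chsum (fun k => sum_f_R0 (fun j => cs j * G (S j) k n) M) B y +
                 1 * chsum (fun k => if Nat.leb k M then e k else 0) B y) by ring.
        rewrite chsum_comb. apply chsum_eq. intros; unfold X; ring. }
      rewrite Hc1, Hc2. ring. }
    intros k Hk HkB. pose proof (cheb_unique B _ Hz k HkB) as E0.
    unfold X in E0. destruct (Nat.leb_spec k M); [lia|]. lra. }
  intros k n Hk Hn.
  rewrite (Coef k) by lia. rewrite (Coef n) by lia.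
  rewrite (sum_eq _ (fun j => (-1) ^ (n + k) * INR k / INR n * (cs j * G (S j) k n))).
  - apply sum_scal_l.
  - intros j Hj. rewrite G_sym by lia. ring.
Qed.
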